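(* Let $S' \subset \mathbb{R}^j$ be a subset of a Euclidean space. Then for all positive integers $k$ and all $m\geq 2$, we have \[\mathrm{Tv}(S' \times \mathbb{R}^k, m) \leq \mathrm{Tv}(S' , \mathrm{Tv}(\mathbb{R}^k,m)).\]
   Context: For $S\subseteq\mathbb{R}^d$ and an integer $m\geq 2$, the Tverberg number $\mathrm{Tv}(S,m)$ is the smallest positive integer $n$ such that any multiset of $n$ points in $S$ admits a partition into $m$ submultisets $A_1,\dots,A_m$ with $\left(\bigcap_{i=1}^m\mathrm{conv}(A_i)\right)\cap S\neq\varnothing$ (and $\mathrm{Tv}(S,m)=\infty$ if no such number exists). *)

(* Defs.v *)
From HB Require Import structures.
From mathcomp Require Import all_boot all_order all_algebra.
From mathcomp Require Import boolp classical_sets reals.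
Set Implicit Arguments. Unset Strict Implicit. Unset Printing Implicit Defensive.
Import Order.TTheory GRing.Theory Num.Theory.
Local Open Scope ring_scope.

Section Tverberg.
Variable R : realType.

Definition in_conv (d n : nat) (p : 'I_n -> 'rV[R]_d) (P : pred 'I_n)
    (x : 'rV[R]_d) : Prop :=
  exists w : 'I_n -> R,
    [/\ forall a, 0 <= w a,
        forall a, ~~ P a -> w a = 0,
        \sum_(a < n) w a = 1
      & x = \sum_(a < n) w a *: p a].

(* Every multiset of n points of S admits a partition into m submultisets
   A_i = {p a | f a = i} whose convex hulls have a common point in S. *)
Definition tverberg_prop (d : nat) (S : set 'rV[R]_d) (m n : nat) : Prop :=
  forall p : 'I_n -> 'rV[R]_d, (forall a, S (p a)) ->
    exists f : 'I_n -> 'I_m, exists x, S x /\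
      forall i : 'I_m, in_conv p (fun a => f a == i) x.

Definition is_least_tv (d : nat) (S : set 'rV[R]_d) (m n : nat) : Prop :=
  [/\ (0 < n)%N, tverberg_prop S m n &
      forall n', (0 < n')%N -> tverberg_prop S m n' -> (n <= n')%N].

(* Tverberg number: Some n = smallest positive n with the property,
   None = infinity. *)
Definition Tv (d : nat) (S : set 'rV[R]_d) (m : nat) : option nat :=
  match pselect (exists n, is_least_tv S m n) with
  | left H => Some (projT1 (cid H))
  | right _ => None
  end.

End Tverberg.

(* Order on N ∪ {∞} (None = ∞). *)
Definition le_ext (a b : option nat) : Prop :=
  match b with
  | None => True
  | Some b' => match a with Some a' => (a' <= b')%N | None => False end
  end.

(* S' × R^k as a subset of R^(j+k): rows whose first j coordinates lie in S'. *)
Definition prod_full (R : realType) (j k : nat) (S' : set 'rV[R]_j)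
  : set 'rV[R]_(j + k) := fun x => S' (lsubmx x).

Definition full_space (R : realType) (k : nat) : set 'rV[R]_k := setT.
Arguments full_space : clear implicits.

(* Main.v *)
Require Import Defs.
From HB Require Import structures.
From mathcomp Require Import all_boot all_order all_algebra.
From mathcomp Require Import boolp classical_sets reals.
Set Implicit Arguments. Unset Strict Implicit. Unset Printing Implicit Defensive.
Import Order.TTheory GRing.Theory Num.Theory.
Local Open Scope ring_scope.

Lemma Tv_spec (R : realType) d (S : set 'rV[R]_d) m n :
  Tv S m = Some n -> is_least_tv S m n.
Proof.
rewrite /Tv; case: pselect => [H|//] [<-]; exact: (projT2 (cid H)).
Qed.

Lemma Tv_le (R : realType) d (S : set 'rV[R]_d) m M :
  (0 < M)%N -> tverberg_prop S m M -> exists T, Tv S m = Some T /\ (T <= M)%N.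
Proof.
move=> M0 HM; rewrite /Tv; case: pselect => [H|H].
  case: (projT2 (cid H)) => _ _ mn; exists (projT1 (cid H)); split => //.
  exact: mn.
exfalso; apply: H.
have ex : exists n, (0 < n)%N && `[< tverberg_prop S m n >].
  by exists M; rewrite M0 /=; apply/asboolP.
exists (ex_minn ex); case: ex_minnP => n /andP[n0 /asboolP Hn] nmin.
split => // n' n'0 Hn'; apply: nmin; rewrite n'0 /=; exact/asboolP.
Qed.

Lemma sum_swap (R : realType) d M N (v : 'I_N -> R) (w : 'I_N -> 'I_M -> R)
  (q : 'I_M -> 'rV[R]_d) :
  \sum_(a < M) (\sum_(i < N) v i * w i a) *: q a =
  \sum_(i < N) v i *: \sum_(a < M) w i a *: q a.
Proof.
under eq_bigr do rewrite scaler_suml.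
rewrite exchange_big /=; apply: eq_bigr => i _.
rewrite scaler_sumr; apply: eq_bigr => a _; by rewrite scalerA.
Qed.

Theorem theorem3 (R : realType) (j : nat) (S' : set 'rV[R]_j) (k m : nat) :
  (0 < k)%N -> (2 <= m)%N ->
  forall N : nat, Tv (full_space R k) m = Some N ->
  le_ext (Tv (@prod_full R j k S') m) (Tv S' N).
Proof.
move=> _ _ N HN; have [_ HtvN _] := Tv_spec HN.
rewrite /le_ext; case E: (Tv S' N) => [M|//].
have [M0 HM _] := Tv_spec E.
suff Hprod : tverberg_prop (@prod_full R j k S') m M.
  by have [T [-> TM]] := Tv_le M0 Hprod.
move=> p Hp.
have [f [x [Sx Hf]]] := HM (fun a => lsubmx (p a)) Hp.
have [w Hw] := choice Hf.
pose y := fun i => \sum_(a < M) w i a *: rsubmx (p a).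
have [g [z [_ Hg]]] := HtvN y (fun _ => I).
have [v Hv] := choice Hg.
exists (fun a => g (f a)), (row_mx x z); split.
  by rewrite /prod_full row_mxKl.
move=> l; case: (Hv l) => v0 vz vs ve.
exists (fun a => \sum_(i < N) v l i * w i a); split.
- move=> a; apply: sumr_ge0 => i _; apply: mulr_ge0 => //.
  by case: (Hw i).
- move=> a /= Hga; apply: big1 => i _.
  case: (eqVneq (f a) i) => [<-|ne]; first by rewrite vz // mul0r.
  by case: (Hw i) => _ wz _ _; rewrite wz ?mulr0 // ne.
- rewrite exchange_big /= -vs; apply: eq_bigr => i _.
  by rewrite -mulr_sumr; case: (Hw i) => _ _ -> _; rewrite mulr1.
- rewrite -[RHS]hsubmxK; congr row_mx.
    rewrite linear_sum /=.
    under eq_bigr do rewrite linearZ /=.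
    rewrite sum_swap.
    under eq_bigr => i _ do (case: (Hw i) => _ _ _ <-).
    by rewrite -scaler_suml vs scale1r.
  rewrite linear_sum /=.
  under eq_bigr do rewrite linearZ /=.
  by rewrite sum_swap.
Qed.
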